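(* Consider the one-cell system. Assume that at time $0$ the disk rotates with angular velocity $\hat\omega$ and that none of the particles which are inside the cell will collide with the disk before time $\tau>0$. Then, given any $\omega\in\mathbb{R}$ and any $0<\delta<\tau$, there exists a way to inject one particle into the cell through the left opening $\partial\Gamma_{\rm L}$ at time $0$ (with a suitable injection point and inward-pointing velocity) such that at time $\delta$ the disk has angular velocity $\omega$ and the injected particle has left the cell through $\partial\Gamma_{\rm L}$. The same holds with $\partial\Gamma_{\rm R}$ in place of $\partial\Gamma_{\rm L}$.
   Context: Cell geometry. Let $\Gamma_{\rm box}\subset\mathbb{R}^2$ be a bounded connected closed domain such that $(x,y)\in\Gamma_{\rm box}$ implies $x\in[0,L]$. Its boundary is $\partial\Gamma_{\rm box}=\partial\Gamma_{\rm L}\cup\partial\Gamma_{\rm R}\cup\bigcup_{k=1}^b\partial\Gamma_k$, where $\partial\Gamma_{\rm L}=\{(0,y):y\in[-a,a]\}$ and $\partial\Gamma_{\rm R}=\{(L,y):y\in[-a,a]\}$ are the two ''openings'' ($a>0$), and each $\partial\Gamma_k$ is an arc of a circle $C_k$ with center $c_k$, the arcs being oriented so that $\partial\Gamma_{\rm box}$ is everywhere dispersing (the arcs bulge into the domain). In the interior of $\Gamma_{\rm box}$ lies a closed disk $D$ of center $c=(L/2,0)$ and radius $r$ with $\partial D\cap\partial\Gamma_{\rm box}=\emptyset$, and for every $z\in\partial\Gamma_{\rm box}$ the segment $[c,z]$ meets $\partial\Gamma_{\rm box}$ only at $z$. The cell is $\Gamma=\Gamma_{\rm box}\setminus D$ (with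 boundary $\partial\Gamma=\partial\Gamma_{\rm box}\cup\partial D$); its corners $\partial\Gamma^*$ are the points where two of the boundary pieces (arcs or openings) meet. Dynamics. Point particles move in straight lines with constant velocity inside $\Gamma$ and do not interact with each other. The disk has an angular position $\phi\in[0,2\pi)$ and angular velocity $\omega\in\mathbb{R}$ with $\dot\phi=\omega$ between collisions. At a point $q$ of $\partial\Gamma$ write the particle velocity as $v=v^{\rm n}e_{\rm n}+v^{\rm t}e_{\rm t}$ with $e_{\rm n}$ the outward unit normal and $e_{\rm t}$ the unit tangent. Collision rules (primes denote values after collision; positions and $\phi$ are unchanged): (1) if $q\in\partial\Gamma_{\rm L}\cup\partial\Gamma_{\rm R}$, the particle continues straight and leaves the cell; (2) if $q\in\partial\Gamma_{\rm box}\setminus(\partial\Gamma_{\rm L}\cup\partial\Gamma_{\rm R})$, then $(v^{\rm n})'=-v^{\rm n}$, $(v^{\rm t})'=v^{\rm t}$ (specular reflection); (3) if $q\in\partial D$, then $(v^{\rm n})'=-v^{\rm n}$, $(v^{\rm t})'=\omega$, $\omega'=v^{\rm t}$. Heat baths. Particles may be injected into the cell at any time through $\partial\Gamma_{\rm L}$ or $\partial\Gamma_{\rm R}$, at any point of the opening and with any velocity pointing into the cell; a realization of the injection process on a time interval is the finite collection of such injection times, points and velocities. Every open set of realizations is assumed to have positive probability. *)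

(* Defs.v *)
From Stdlib Require Import Reals Lra List.
Import ListNotations.
Open Scope R_scope.

Definition pt := (R * R)%type.
Definition padd (p q : pt) : pt := (fst p + fst q, snd p + snd q).
Definition psub (p q : pt) : pt := (fst p - fst q, snd p - snd q).
Definition pscal (s : R) (p : pt) : pt := (s * fst p, s * snd p).
Definition dot (p q : pt) : R := fst p * fst q + snd p * snd q.
Definition dist (p q : pt) : R := sqrt (dot (psub p q) (psub p q)).

Definition interior (S : pt -> Prop) (x : pt) : Prop :=
  exists e, 0 < e /\ forall y, dist x y < e -> S y.
Definition closure (S : pt -> Prop) (x : pt) : Prop :=
  forall e, 0 < e -> exists y, S y /\ dist x y < e.
Definition boundary (S : pt -> Prop) (x : pt) : Prop :=
  closure S x /\ ~ interior S x.
Definition is_open (S : pt -> Prop) : Prop := forall x, S x -> interior S x.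
Definition is_closed (S : pt -> Prop) : Prop := forall x, closure S x -> S x.
Definition bounded (S : pt -> Prop) : Prop :=
  exists M, forall x, S x -> dist x (0, 0) <= M.
Definition connected (S : pt -> Prop) : Prop :=
  ~ exists U V : pt -> Prop,
      is_open U /\ is_open V /\
      (forall x, S x -> U x \/ V x) /\
      (exists x, S x /\ U x) /\ (exists x, S x /\ V x) /\
      (forall x, ~ (S x /\ U x /\ V x)).

Record cell := Cell {
  cL : R;
  ca : R;                 (* half-height a of the openings *)
  Gbox : pt -> Prop;
  nb : nat;               (* number b of arcs; arcs indexed by k < nb *)
  arc_center : nat -> pt;
  arc_radius : nat -> R;
  arc_from : nat -> R;    (* arc k = { c_k + rho_k (cos t, sin t) | from <= t <= to } *)
  arc_to : nat -> R;
  cr : R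
}.

Definition dcenter (C : cell) : pt := (cL C / 2, 0).

Definition onL (C : cell) (x : pt) : Prop := fst x = 0 /\ - ca C <= snd x <= ca C.
Definition onR (C : cell) (x : pt) : Prop := fst x = cL C /\ - ca C <= snd x <= ca C.
Definition onArc (C : cell) (k : nat) (x : pt) : Prop :=
  exists t, arc_from C k <= t <= arc_to C k /\
    x = padd (arc_center C k) (pscal (arc_radius C k) (cos t, sin t)).

Inductive piece := PL | PR | PA (k : nat).
Definition valid_piece (C : cell) (p : piece) : Prop :=
  match p with PA k => (k < nb C)%nat | _ => True end.
Definition onPiece (C : cell) (p : piece) (x : pt) : Prop :=
  match p with PL => onL C x | PR => onR C x | PA k => onArc C k x end.
Definition corner (C : cell) (x : pt) : Prop :=
  exists p1 p2, p1 <> p2 /\ valid_piece C p1 /\ valid_piece C p2 /\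
    onPiece C p1 x /\ onPiece C p2 x.

Definition cell_ok (C : cell) : Prop :=
  0 < cL C /\ 0 < ca C /\ 0 < cr C /\
  bounded (Gbox C) /\ is_closed (Gbox C) /\ connected (Gbox C) /\
  (forall x, Gbox C x <-> closure (interior (Gbox C)) x) /\
  (forall x, Gbox C x -> 0 <= fst x <= cL C) /\
  (forall k, (k < nb C)%nat ->
     0 < arc_radius C k /\ arc_from C k < arc_to C k < arc_from C k + 2 * PI) /\
  (forall x, boundary (Gbox C) x <->
     (onL C x \/ onR C x \/ exists k, (k < nb C)%nat /\ onArc C k x)) /\
  (* dispersing: near each arc point, Gamma_box lies outside the circle C_k *)
  (forall k, (k < nb C)%nat -> forall z, onArc C k z ->
     exists e, 0 < e /\ forall y, dist y z < e ->
       dist y (arc_center C k) < arc_radius C k -> ~ Gbox C y) /\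
  (forall x, dist x (dcenter C) <= cr C -> interior (Gbox C) x) /\
  (forall x, dist x (dcenter C) = cr C -> ~ boundary (Gbox C) x) /\
  (forall z, boundary (Gbox C) z -> forall s, 0 <= s < 1 ->
     ~ boundary (Gbox C) (padd (dcenter C) (pscal s (psub z (dcenter C))))).

Definition inGamma (C : cell) (x : pt) : Prop := Gbox C x /\ cr C <= dist x (dcenter C).
Definition intGamma (C : cell) (x : pt) : Prop :=
  interior (Gbox C) x /\ cr C < dist x (dcenter C).
Definition onDisk (C : cell) (x : pt) : Prop := dist x (dcenter C) = cr C.

(** normals (outward w.r.t. Gamma) and tangent *)
Definition diskN (C : cell) (q : pt) : pt := pscal (/ cr C) (psub (dcenter C) q).
Definition arcN (C : cell) (k : nat) (q : pt) : pt :=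
  pscal (/ arc_radius C k) (psub (arc_center C k) q).
(* unit tangent e_t: e_n rotated by +pi/2 (fixes the sign convention for omega) *)
Definition tang (n : pt) : pt := (- snd n, fst n).
Definition reflect (n v : pt) : pt := psub v (pscal (2 * dot v n) n).

Record event := Ev { etime : R; epos : pt; evin : pt; evout : pt }.

Definition is_exit (C : cell) (e : event) : Prop := onL C (epos e) \/ onR C (epos e).
Definition is_disk_ev (C : cell) (e : event) : Prop := onDisk C (epos e).

Definition free_flight (C : cell) (t0 : R) (x0 v0 : pt) (t1 : R) : Prop :=
  forall s, t0 < s < t1 -> intGamma C (padd x0 (pscal (s - t0) v0)).

(* collision rules; w : R -> R is the angular velocity of the disk as a
   function of time, the value just before time t being its left limit *)
Definition event_ok (C : cell) (w : R -> R) (e : event) : Prop :=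
  let q := epos e in
  (boundary (Gbox C) q \/ onDisk C q) /\ ~ corner C q /\
  (onL C q \/ onR C q -> evout e = evin e) /\
  (forall k, (k < nb C)%nat -> onArc C k q ->
     evout e = reflect (arcN C k q) (evin e)) /\
  (onDisk C q ->
     dot (evout e) (diskN C q) = - dot (evin e) (diskN C q) /\
     exists eps, 0 < eps /\ forall s, etime e - eps < s < etime e ->
       w s = dot (evout e) (tang (diskN C q))).

(* a particle path on [t0,T] started at x0 with velocity v0, given by the
   chronological list of its collisions; a collision with an opening is an
   exit and is the last event *)
Fixpoint path_from (C : cell) (w : R -> R) (T t0 : R) (x0 v0 : pt)
    (E : list event) : Prop :=
  match E with
  | [] => t0 <= T /\ free_flight C t0 x0 v0 T
  | e :: E' =>
      t0 < etime e <= T /\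
      epos e = padd x0 (pscal (etime e - t0) v0) /\
      evin e = v0 /\
      free_flight C t0 x0 v0 (etime e) /\
      event_ok C w e /\
      (is_exit C e -> E' = []) /\
      (~ is_exit C e -> path_from C w T (etime e) (epos e) (evout e) E')
  end.

Definition sys_ok (C : cell) (omh T : R) (P : list (pt * pt)) (w : R -> R)
    (Es : list (list event)) : Prop :=
  w 0 = omh /\
  Forall2 (fun p E => path_from C w T 0 (fst p) (snd p) E) P Es /\
  (forall s t, 0 <= s -> s < t -> t <= T ->
     (forall E e, In E Es -> In e E -> is_disk_ev C e -> ~ (s < etime e <= t)) ->
     w s = w t) /\
  (forall E e, In E Es -> In e E -> is_disk_ev C e ->
     w (etime e) = dot (evin e) (tang (diskN C (epos e)))) /\
  (forall i j E1 E2 e1 e2, i <> j -> nth_error Es i = Some E1 ->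
     nth_error Es j = Some E2 -> In e1 E1 -> In e2 E2 ->
     is_disk_ev C e1 -> is_disk_ev C e2 -> etime e1 <> etime e2).

(** openings: side true = left opening, false = right opening *)
Definition opening (C : cell) (left : bool) (y : pt) : Prop :=
  if left then onL C y else onR C y.
Definition inward (left : bool) (v : pt) : Prop :=
  if left then 0 < fst v else fst v < 0.

(* Main.v *)
Require Import Defs.
From Stdlib Require Import Reals List Lra Classical.
Require Import Defs.
Import ListNotations.
Open Scope R_scope.

Lemma dist_lt p q e : 0 < e ->
  (fst p - fst q) * (fst p - fst q) + (snd p - snd q) * (snd p - snd q) < e * e ->
  dist p q < e.
Proof.
  intros He H. unfold dist, dot, psub; simpl.
  rewrite <- (sqrt_square e) by lra. apply sqrt_lt_1_alt. split; [apply Rplus_le_le_0_compat; apply Rle_0_sqr|lra].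
Qed.

Lemma dist_le p q e : 0 <= e ->
  (fst p - fst q) * (fst p - fst q) + (snd p - snd q) * (snd p - snd q) <= e * e ->
  dist p q <= e.
Proof.
  intros He H. unfold dist, dot, psub; simpl.
  rewrite <- (sqrt_square e) by lra. apply sqrt_le_1_alt. nra.
Qed.

Lemma dist_gt p q e : 0 <= e ->
  e * e < (fst p - fst q) * (fst p - fst q) + (snd p - snd q) * (snd p - snd q) ->
  e < dist p q.
Proof.
  intros He H. unfold dist, dot, psub; simpl.
  rewrite <- (sqrt_square e) by lra. apply sqrt_lt_1_alt. split; [nra|lra].
Qed.

Lemma dist_eq p q e : 0 <= e ->
  (fst p - fst q) * (fst p - fst q) + (snd p - snd q) * (snd p - snd q) = e * e ->
  dist p q = e.
Proof.
  intros He H. unfold dist, dot, psub; simpl. rewrite H. apply sqrt_square; lra.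
Qed.

Lemma interior_in S x : interior S x -> S x.
Proof.
  intros (e & He & H). apply H. apply dist_lt; auto. nra.
Qed.

Lemma in_closure S x : S x -> closure S x.
Proof.
  intros Hx e He. exists x. split; auto. apply dist_lt; auto. nra.
Qed.

Lemma nb_int S x : S x -> ~ boundary S x -> interior S x.
Proof.
  intros Hx Hb. apply NNPP. intro Hi. apply Hb. split; auto. apply in_closure; auto.
Qed.

Lemma close_alg d A B e : 0 < e -> - (e / (A*A+B*B + 1)) < d < e / (A*A+B*B + 1) ->
  d * A * (d * A) + d * B * (d * B) < e * e.
Proof.
  intros He Hd.
  assert (HK : 0 < A*A+B*B+1) by nra.
  set (K := A*A+B*B+1) in *.
  assert (H1 : d * K < e /\ - e < d * K).
  { destruct Hd as [Hd1 Hd2]. split.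
    - apply (Rmult_lt_compat_r K) in Hd2; auto.
      replace (e / K * K) with e in Hd2 by (field; lra). lra.
    - apply (Rmult_lt_compat_r K) in Hd1; auto.
      replace (- (e / K) * K) with (- e) in Hd1 by (field; lra). lra. }
  assert (H2 : d * K * (d * K) < e * e) by nra.
  unfold K in *. nra.
Qed.

Ltac unpack HC := destruct HC as (HL & Ha & Hr & Hbd & Hcl & Hcon & Hci & Hx & Harc & Hbdry & Hdisp & Hdisk & Hdb & Hstar).

Lemma radial C (HC : cell_ok C) z : boundary (Gbox C) z -> forall s, 0 <= s < 1 ->
  interior (Gbox C) (padd (dcenter C) (pscal s (psub z (dcenter C)))).
Proof.
  intros Hz.
  pose (P := fun s => padd (dcenter C) (pscal s (psub z (dcenter C)))).
  change (forall s, 0 <= s < 1 -> interior (Gbox C) (P s)).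
  pose proof HC as HC'. unpack HC'.
  set (K := dot (psub z (dcenter C)) (psub z (dcenter C))).
  assert (HK : 0 <= K) by (unfold K, dot; nra).
  assert (close : forall s s' e, 0 < e -> - (e / (K + 1)) < s - s' < e / (K + 1) ->
     dist (P s) (P s') < e).
  { intros s s' e He Hd. apply dist_lt; auto.
    set (A := fst (psub z (dcenter C))). set (B := snd (psub z (dcenter C))).
    assert (E1 : fst (P s) - fst (P s') = (s - s') * A) by (unfold P, padd, pscal, A; simpl; ring).
    assert (E2 : snd (P s) - snd (P s') = (s - s') * B) by (unfold P, padd, pscal, B; simpl; ring).
    rewrite E1, E2. assert (EK : K = A * A + B * B) by reflexivity. rewrite EK in Hd.
    apply close_alg; auto. }
  assert (P0 : Gbox C (P 0)).
  { apply interior_in. apply Hdisk. apply dist_le; [lra|].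
    unfold P, padd, pscal, psub; simpl. nra. }
  pose (A := fun s => 0 <= s <= 1 /\ forall s', 0 <= s' <= s -> Gbox C (P s')).
  assert (HA0 : A 0).
  { split; [lra|]. intros s' Hs'. replace s' with 0 by lra. auto. }
  destruct (completeness A) as [m [Hub Hlub]].
  { exists 1. intros y0 [Hx1 _]. lra. }
  { exists 0; auto. }
  assert (Hm0 : 0 <= m) by (apply Hub; auto).
  assert (Hm1 : m <= 1) by (apply Hlub; intros y0 [Hx1 _]; lra).
  assert (Dn : forall s, 0 <= s < m -> Gbox C (P s)).
  { intros s Hs. destruct (classic (exists s'', A s'' /\ s < s'')) as [[s'' [[_ Hs''] Hlt]]|Hno].
    - apply Hs''. lra.
    - exfalso. assert (m <= s); [|lra]. apply Hlub. intros x Hx0.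
      destruct (Rle_or_lt x s); auto. exfalso; apply Hno; eauto. }
  assert (Hm : 1 <= m).
  { destruct (Rle_or_lt 1 m) as [|Hlt]; auto. exfalso.
    assert (GPm : Gbox C (P m)).
    { apply Hcl. intros e He.
      destruct (Req_dec m 0) as [Heq|Hne].
      - exists (P m). split. rewrite Heq; auto. apply dist_lt; auto. nra.
      - assert (Hd : 0 < e / (K + 1)) by (apply Rdiv_lt_0_compat; lra).
        exists (P (m - Rmin m (e / (K+1)) / 2)). split.
        + apply Dn. split. pose proof (Rmin_l m (e/(K+1))). lra.
          assert (0 < Rmin m (e/(K+1))) by (apply Rmin_glb_lt; lra). lra.
        + apply close; auto. pose proof (Rmin_r m (e/(K+1))).
          assert (0 < Rmin m (e/(K+1))) by (apply Rmin_glb_lt; lra). lra. }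
    assert (Hi : interior (Gbox C) (P m)).
    { apply nb_int; auto. apply (Hstar z Hz m). lra. }
    destruct Hi as (e & He & Hball).
    assert (Hd : 0 < e / (K + 1)) by (apply Rdiv_lt_0_compat; lra).
    set (s1 := Rmin 1 (m + e / (K+1) / 2)).
    assert (As1 : A s1).
    { split. unfold s1. pose proof (Rmin_l 1 (m + e / (K+1) / 2)).
      split; [apply Rmin_glb; lra|lra].
      intros s' Hs'. destruct (Rlt_or_le s' m). apply Dn; lra.
      apply Hball. apply close; auto. unfold s1 in Hs'.
      pose proof (Rmin_r 1 (m + e / (K+1) / 2)). lra. }
    assert (s1 <= m) by (apply Hub; auto).
    unfold s1 in H. unfold Rmin in H. destruct (Rle_dec 1 (m + e / (K + 1) / 2)); lra. }
  intros s Hs. apply nb_int. apply Dn; lra. apply (Hstar z Hz s). lra.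
Qed.

Lemma div_le X Y a : 0 < Y -> X <= a * Y -> X / Y <= a.
Proof.
  intros HY H. apply (Rmult_le_reg_r Y); auto.
  replace (X / Y * Y) with X by (field; lra). lra.
Qed.
Lemma le_div X Y a : 0 < Y -> a * Y <= X -> a <= X / Y.
Proof.
  intros HY H. apply (Rmult_le_reg_r Y); auto.
  replace (X / Y * Y) with X by (field; lra). lra.
Qed.

Definition xo C (sg : R) := cL C / 2 - sg * (cL C / 2).

Lemma open_bd C (HC : cell_ok C) sg (Hs : sg = 1 \/ sg = -1) y :
  - ca C <= y <= ca C -> boundary (Gbox C) (xo C sg, y).
Proof.
  intros Hy. pose proof HC as HC'. unpack HC'. apply Hbdry.
  unfold onL, onR, xo; simpl. destruct Hs as [-> | ->]; [left|right;left]; split; auto; lra.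
Qed.

Lemma tri C (HC : cell_ok C) sg (Hs : sg = 1 \/ sg = -1) p s y' :
  0 <= s < 1 -> - ca C <= y' <= ca C ->
  fst p = cL C / 2 - s * sg * (cL C / 2) -> snd p = s * y' -> interior (Gbox C) p.
Proof.
  intros Hs1 Hy Hf Hn.
  replace p with (padd (dcenter C) (pscal s (psub (xo C sg, y') (dcenter C)))).
  - apply radial; auto. apply open_bd; auto.
  - destruct p as [p1 p2]; simpl in *. unfold padd, pscal, psub, dcenter, xo; simpl.
    rewrite Hf, Hn. f_equal; ring.
Qed.

Lemma goodpt C (HC : cell_ok C) sg (Hs : sg = 1 \/ sg = -1) p d : 0 < d -> cr C + d < cL C / 2 ->
  fst p = cL C / 2 - sg * (cr C + d) ->
  cL C * snd p <= 2 * ca C * (cr C + d) -> - (2 * ca C * (cr C + d)) <= cL C * snd p ->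
  intGamma C p.
Proof.
  intros Hd Hd2 Hf Hn1 Hn2. pose proof HC as HC'. unpack HC'.
  set (s := 2 * (cr C + d) / cL C).
  assert (Hs0 : 0 < s) by (unfold s; apply Rdiv_lt_0_compat; lra).
  assert (Hs1 : s < 1).
  { unfold s. replace 1 with (cL C / cL C) by (field; lra).
    unfold Rdiv. apply Rmult_lt_compat_r. apply Rinv_0_lt_compat; lra. lra. }
  split.
  - apply (tri C HC sg Hs p s (snd p / s)); [lra| |rewrite Hf; unfold s; field; lra| field; lra].
    split.
    + apply le_div; auto. unfold s.
      apply (Rmult_le_reg_r (cL C)); auto.
      replace (- ca C * (2 * (cr C + d) / cL C) * cL C) with (- (2 * ca C * (cr C + d))) by (field; lra).
      lra.
    + apply div_le; auto. unfold s.
      apply (Rmult_le_reg_r (cL C)); auto.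
      replace (ca C * (2 * (cr C + d) / cL C) * cL C) with ((2 * ca C * (cr C + d))) by (field; lra).
      lra.
  - apply dist_gt; [lra|]. unfold dcenter; simpl. rewrite Hf.
    destruct Hs as [-> | ->]; nra.
Qed.

Lemma notarc C (HC : cell_ok C) sg (Hs : sg = 1 \/ sg = -1) y0 k :
  - ca C < y0 < ca C -> (k < nb C)%nat -> ~ onArc C k (xo C sg, y0).
Proof.
  intros Hy Hk Hon. pose proof HC as HC'. unpack HC'.
  destruct (Hdisp k Hk _ Hon) as (e & He & Hnot).
  destruct Hon as (t0 & Ht0 & Heq).
  destruct (Harc k Hk) as (Hrho & Hft1 & Hft2).
  set (m := arc_center C k) in *. set (rho := arc_radius C k) in *.
  assert (Ex : xo C sg = fst m + rho * cos t0) by (apply (f_equal fst) in Heq; exact Heq).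
  assert (Ey : y0 = snd m + rho * sin t0) by (apply (f_equal snd) in Heq; exact Heq).
  set (c0 := cos t0) in *. set (s0 := sin t0) in *.
  assert (Hcs : s0 * s0 + c0 * c0 = 1) by (pose proof (sin2_cos2 t0); unfold Rsqr in *; exact H).
  assert (Hc0 : -1 <= c0 <= 1) by apply COS_bound.
  assert (Hsc : -1 <= sg * c0 <= 1) by (destruct Hs as [-> | ->]; lra).
  assert (Hsg2 : sg * sg = 1) by (destruct Hs as [-> | ->]; lra).
  assert (HL' : xo C sg = cL C / 2 - sg * (cL C / 2)) by reflexivity.
  destruct (Rle_lt_or_eq_dec (sg * c0) 1 (proj2 Hsc)) as [Hlt | Heq1].
  - set (g := Rmin (ca C - y0) (ca C + y0)).
    assert (Hg : 0 < g) by (apply Rmin_glb_lt; lra).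
    assert (Hg1 : g <= ca C - y0) by apply Rmin_l.
    assert (Hg2 : g <= ca C + y0) by apply Rmin_r.
    set (t := Rmin (Rmin (rho/2) (e/4)) (Rmin (cL C/8) (g * cL C / (2 * (cL C + 4 * ca C))))).
    assert (Hq : 0 < g * cL C / (2 * (cL C + 4 * ca C))) by (apply Rdiv_lt_0_compat; nra).
    assert (Ht : 0 < t) by (unfold t; repeat apply Rmin_glb_lt; lra).
    assert (Ht1 : t <= rho / 2) by (unfold t; eapply Rle_trans; [apply Rmin_l|apply Rmin_l]).
    assert (Ht2 : t <= e / 4) by (unfold t; eapply Rle_trans; [apply Rmin_l|apply Rmin_r]).
    assert (Ht3 : t <= cL C / 8) by (unfold t; eapply Rle_trans; [apply Rmin_r|apply Rmin_l]).
    assert (Ht4 : t <= g * cL C / (2 * (cL C + 4 * ca C))) by (unfold t; eapply Rle_trans; [apply Rmin_r|apply Rmin_r]).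
    assert (Ht5 : t * (cL C + 4 * ca C) * 2 <= g * cL C).
    { apply (Rmult_le_compat_r (2 * (cL C + 4 * ca C))) in Ht4; [|nra].
      replace (g * cL C / (2 * (cL C + 4 * ca C)) * (2 * (cL C + 4 * ca C))) with (g * cL C) in Ht4 by (field; nra).
      nra. }
    set (p := (xo C sg + t * (sg - c0), y0 - t * s0)).
    apply (Hnot p).
    + apply dist_lt; auto. unfold p; simpl.
      replace (xo C sg + t * (sg - c0) - xo C sg) with (t * (sg - c0)) by ring.
      replace (y0 - t * s0 - y0) with (- (t * s0)) by ring.
      assert (E : t * (sg - c0) * (t * (sg - c0)) + - (t * s0) * - (t * s0) = 2 * t * t * (1 - sg * c0)) by nra.
      rewrite E. nra.
    + apply dist_lt; auto. unfold p; simpl.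
      replace (xo C sg + t * (sg - c0) - fst m) with (t * (sg - c0) + rho * c0) by lra.
      replace (y0 - t * s0 - snd m) with (- (t * s0) + rho * s0) by lra.
      assert (E : (t * (sg - c0) + rho * c0) * (t * (sg - c0) + rho * c0) + (- (t * s0) + rho * s0) * (- (t * s0) + rho * s0)
                  = rho * rho + 2 * t * (1 - sg * c0) * (t - rho)).
      { transitivity (rho * rho + 2 * t * (1 - sg * c0) * (t - rho) + t*t*(sg*sg - 1) + (t*t - 2*t*rho + rho*rho)*(s0*s0+c0*c0-1)); [ring|].
        rewrite Hsg2, Hcs. ring. }
      rewrite E. assert (0 < 2 * t * (1 - sg * c0)) by nra. nra.
    + apply interior_in.
      set (s := 1 - 2 * t * (1 - sg * c0) / cL C).
      assert (Es : 2 * t * (1 - sg * c0) / cL C * cL C = 2 * t * (1 - sg * c0)) by (field; lra).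
      assert (Hs0 : 1 / 2 <= s).
      { unfold s. assert (2 * t * (1 - sg * c0) / cL C <= 1/2); [|lra].
        apply div_le; [lra|nra]. }
      assert (Hs1 : s < 1).
      { unfold s. assert (0 < 2 * t * (1 - sg * c0) / cL C); [|lra]. apply Rdiv_lt_0_compat; nra. }
      assert (Has : ca C - 4 * ca C * t / cL C <= ca C * s).
      { unfold s. assert (2 * t * (1 - sg * c0) / cL C <= 4 * t / cL C).
        { unfold Rdiv. apply Rmult_le_compat_r. left; apply Rinv_0_lt_compat; lra. nra. }
        replace (4 * ca C * t / cL C) with (ca C * (4 * t / cL C)) by (field; lra). nra. }
      assert (Hat : t + 4 * ca C * t / cL C <= g).
      { replace (t + 4 * ca C * t / cL C) with (t * (cL C + 4 * ca C) / cL C) by (field; lra).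
        apply div_le; [lra|nra]. }
      assert (Hs02 : -1 <= s0 <= 1) by nra.
      apply (tri C HC sg Hs p s ((y0 - t * s0) / s)).
      * lra.
      * split; [apply le_div|apply div_le]; try lra; nra.
      * unfold p; simpl. rewrite HL'.
        assert (Hsl : s * cL C = cL C - 2 * t * (1 - sg * c0)) by (unfold s; field; lra).
        replace (s * sg * (cL C / 2)) with (sg * (s * cL C) / 2) by field.
        rewrite Hsl.
        transitivity (cL C / 2 - sg * (cL C - 2 * t * (1 - sg * c0)) / 2 + t * c0 * (sg * sg - 1)); [|rewrite Hsg2; field].
        field.
      * unfold p; simpl. field. lra.
  -
    assert (Hend : forall f, arc_from C k <= f <= arc_to C k -> sg * cos f = 1 /\ sin f = 0).
    { intros f Hf.
      assert (Hb : boundary (Gbox C) (padd m (pscal rho (cos f, sin f)))).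
      { apply Hbdry. right. right. exists k. split; auto. exists f. split; auto. }
      assert (Hg : Gbox C (padd m (pscal rho (cos f, sin f)))) by (apply Hcl; apply Hb).
      apply Hx in Hg. simpl in Hg.
      assert (Hcf : -1 <= cos f <= 1) by apply COS_bound.
      assert (Hsf : sin f * sin f + cos f * cos f = 1) by (pose proof (sin2_cos2 f); unfold Rsqr in *; exact H).
      assert (Hx1 : sg * cos f >= 1).
      { destruct Hs as [-> | ->]; unfold xo in Ex; nra. }
      assert (sg * cos f = 1) by (destruct Hs as [-> | ->]; lra).
      split; auto. destruct Hs as [-> | ->]; nra. }
    destruct (Hend (arc_from C k)) as [H1 H2]; [lra|].
    destruct (Hend (arc_to C k)) as [H3 H4]; [lra|].
    assert (Hc : cos (arc_to C k - arc_from C k) = 1).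
    { rewrite cos_minus. rewrite H2, H4. destruct Hs as [-> | ->]; nra. }
    set (h := (arc_to C k - arc_from C k) / 2).
    assert (Hh : 0 < sin h) by (apply sin_gt_0; unfold h; lra).
    replace (arc_to C k - arc_from C k) with (2 * h) in Hc by (unfold h; field).
    rewrite cos_2a_sin in Hc. nra.
Qed.

Lemma event_ok_w C w w' e : event_ok C w e -> ~ is_disk_ev C e -> event_ok C w' e.
Proof.
  unfold event_ok. intros (H1 & H2 & H3 & H4 & H5) Hn.
  split; [|split; [|split; [|split]]]; auto.
  intro Hd; exfalso; apply Hn; exact Hd.
Qed.

Lemma trunc C w w' T D : D < T -> forall E t0 x v,
  path_from C w T t0 x v E -> (forall e, In e E -> is_disk_ev C e -> T <= etime e) ->
  t0 <= D -> exists E', path_from C w' D t0 x v E' /\ (forall e, In e E' -> ~ is_disk_ev C e).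
Proof.
  intros HDT E. induction E as [|e E IH]; intros t0 x v Hp Hd Ht0.
  - exists []. split; [|simpl; tauto]. destruct Hp as [_ Hf]. split; auto.
    intros s Hs. apply Hf. lra.
  - destruct Hp as (Ht & Hpos & Hin & Hf & Hev & Hex & Hnex).
    assert (Hnd : etime e <= D -> ~ is_disk_ev C e).
    { intros Hle Hdi. specialize (Hd e (or_introl eq_refl) Hdi). lra. }
    destruct (Rle_or_lt (etime e) D) as [Hle|Hlt].
    + destruct (classic (is_exit C e)) as [Hx|Hnx].
      * exists [e]. split.
        -- simpl. refine (conj _ (conj Hpos (conj Hin (conj Hf (conj _ (conj _ _)))))).
           ++ lra.
           ++ apply event_ok_w with w; auto.
           ++ auto.
           ++ intro; contradiction.
        -- intros e' [<-|[]]; auto.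
      * destruct (IH (etime e) (epos e) (evout e)) as (E' & HE' & HE'd); auto.
        { intros e' He' Hd'. apply Hd; simpl; auto. }
        exists (e :: E'). split.
        -- simpl. refine (conj _ (conj Hpos (conj Hin (conj Hf (conj _ (conj _ _)))))).
           ++ lra.
           ++ apply event_ok_w with w; auto.
           ++ intro; contradiction.
           ++ auto.
        -- intros e' [<-|He']; auto.
    + exists []. split; [|simpl; tauto]. split; auto. intros s Hs. apply Hf. lra.
Qed.

Lemma build C w' tau delta : delta < tau -> 0 <= delta -> forall P : list (pt * pt),
  (forall p, In p P -> exists w E, path_from C w tau 0 (fst p) (snd p) E /\
     forall e, In e E -> is_disk_ev C e -> tau <= etime e) ->
  exists Es, Forall2 (fun p E => path_from C w' delta 0 (fst p) (snd p) E) P Es /\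
    forall E e, In E Es -> In e E -> ~ is_disk_ev C e.
Proof.
  intros Hdt Hd0 P. induction P as [|p P IH]; intros H.
  - exists []. split; [constructor|simpl; tauto].
  - destruct IH as (Es & HF & HEs). { intros q Hq. apply H; simpl; auto. }
    destruct (H p (or_introl eq_refl)) as (w & E & Hp & HE).
    destruct (trunc C w w' tau delta Hdt E 0 (fst p) (snd p) Hp HE Hd0) as (E' & HE' & HE'd).
    exists (E' :: Es). split; [constructor; auto|].
    intros E0 e [<-|HE0] He; eauto.
Qed.

Lemma main_gen C (HC : cell_ok C) sg (Hs : sg = 1 \/ sg = -1) omh tau (P : list (pt * pt)) om delta :
  (forall p, In p P -> exists w E, path_from C w tau 0 (fst p) (snd p) E /\
     forall e, In e E -> is_disk_ev C e -> tau <= etime e) ->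
  0 < delta < tau ->
  exists (y v : pt) (w : R -> R) (E : list event) (Es : list (list event)),
    fst y = xo C sg /\ - ca C <= snd y <= ca C /\ 0 < sg * fst v /\
    sys_ok C omh delta ((y, v) :: P) w (E :: Es) /\
    w delta = om /\
    exists E0 e, E = E0 ++ [e] /\ fst (epos e) = xo C sg /\ - ca C <= snd (epos e) <= ca C.
Proof.
  intros HP Hdel. pose proof HC as HC'. unpack HC'.
  assert (Hsg2 : sg * sg = 1) by (destruct Hs as [-> | ->]; lra).
  assert (Hqpos : cr C < cL C / 2).
  { assert (Hi : interior (Gbox C) (cL C / 2 - cr C, 0)).
    { apply Hdisk. apply dist_le; [lra|]. unfold dcenter; simpl. nra. }
    destruct Hi as (e & He & Hb).
    assert (Hg : Gbox C (cL C / 2 - cr C - e / 2, 0)).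
    { apply Hb. apply dist_lt; auto. simpl. nra. }
    apply Hx in Hg. simpl in Hg. lra. }
  set (L := cL C) in *. set (a := ca C) in *. set (r := cr C) in *.
  set (N := L / delta + L * (Rabs om + Rabs omh) / (2 * a) + 1).
  assert (Hab : 0 <= L * (Rabs om + Rabs omh) / (2 * a)).
  { apply Rmult_le_pos. pose proof (Rabs_pos om); pose proof (Rabs_pos omh); nra.
    left; apply Rinv_0_lt_compat; lra. }
  assert (HLd : 0 < L / delta) by (apply Rdiv_lt_0_compat; lra).
  assert (HN0 : 0 < N) by (unfold N; lra).
  assert (HNd : L <= delta * N).
  { unfold N. replace (delta * (L / delta + L * (Rabs om + Rabs omh) / (2 * a) + 1)) with
       (L + delta * (L * (Rabs om + Rabs omh) / (2 * a) + 1)) by (field; lra). nra. }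
  assert (HNo : L * (Rabs om + Rabs omh) <= 2 * a * N).
  { unfold N. replace (2 * a * (L / delta + L * (Rabs om + Rabs omh) / (2 * a) + 1)) with
       (2 * a * (L / delta + 1) + L * (Rabs om + Rabs omh)) by (field; lra). nra. }
  assert (Hom : - (2 * a * N) <= L * om <= 2 * a * N).
  { pose proof (RRle_abs om); pose proof (RRle_abs (- om)); rewrite Rabs_Ropp in *.
    pose proof (Rabs_pos omh). split; nra. }
  assert (Homh : - (2 * a * N) <= L * omh <= 2 * a * N).
  { pose proof (RRle_abs omh); pose proof (RRle_abs (- omh)); rewrite Rabs_Ropp in *.
    pose proof (Rabs_pos om). split; nra. }
  set (t1 := (L / 2 - r) / N).
  assert (Ht1N : t1 * N = L / 2 - r) by (unfold t1; field; lra).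
  assert (Ht1 : 0 < t1) by (unfold t1; apply Rdiv_lt_0_compat; lra).
  assert (H2t : t1 + t1 < delta) by nra.
  set (vin := (sg * N, sg * om)). set (vout := (- (sg * N), sg * omh)).
  set (q := (L / 2 - sg * r, 0)).
  set (y := (xo C sg, - (t1 * (sg * om)))).
  set (z := padd q (pscal (t1 + t1 - t1) vout)).
  set (e1 := Ev t1 q vin vout). set (e2 := Ev (t1 + t1) z vout vout).
  set (w := fun s => if Rlt_dec s t1 then omh else om).
  assert (Hq_int : interior (Gbox C) q).
  { apply Hdisk. apply dist_le; [lra|]. unfold q, dcenter; simpl. fold L. destruct Hs as [-> | ->]; nra. }
  assert (Hq_nb : ~ boundary (Gbox C) q) by (intros [_ Hn]; auto).
  assert (Hq_disk : onDisk C q).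
  { unfold onDisk; apply dist_eq; [fold r; lra|]. unfold q, dcenter; simpl. fold L. fold r. destruct Hs as [-> | ->]; field. }
  assert (HdN : diskN C q = (sg, 0)).
  { unfold diskN, pscal, psub, q, dcenter; simpl. fold L r. f_equal; field; lra. }
  assert (Hzeq : z = (xo C sg, t1 * (sg * omh))).
  { unfold z, q, vout, padd, pscal, xo; simpl. fold L.
    f_equal.
    - replace ((t1 + t1 - t1) * - (sg * N)) with (- (sg * (t1 * N))) by ring.
      rewrite Ht1N. field.
    - ring. }
  assert (Hzb : - a < t1 * (sg * omh) < a).
  { assert (HL0 : 0 < L) by lra.
    assert (L * (t1 * (sg * omh)) < a * L /\ - (a * L) < L * (t1 * (sg * omh))).
    { destruct Hs as [-> | ->]; split; nra. }
    split; nra. }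
  assert (Hz_bd : boundary (Gbox C) z) by (rewrite Hzeq; apply open_bd; auto; fold a; lra).
  assert (Hz_na : forall k, (k < nb C)%nat -> ~ onArc C k z).
  { intros k Hk. rewrite Hzeq. apply notarc; auto; fold a; lra. }
  assert (Hz_LR : ~ (onL C z /\ onR C z)).
  { intros [[H1 _] [H2 _]]. fold L in H2. lra. }
  assert (Hz_nd : ~ onDisk C z) by (intro Hd; apply (Hdb z Hd); auto).
  assert (Hz_ex : is_exit C e2).
  { unfold is_exit, e2; simpl. rewrite Hzeq. unfold onL, onR, xo; simpl. fold L a.
    destruct Hs as [-> | ->]; [left|right]; split; lra. }
  assert (Hq_nex : ~ is_exit C e1).
  { intros [H|H]; apply Hq_nb; apply Hbdry; auto. }
  assert (Hpath : path_from C w delta 0 y vin [e1; e2]).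
  { simpl. split; [lra|]. split.
    { unfold q, y, vin, padd, pscal, xo; simpl. fold L. f_equal.
      - replace ((t1 - 0) * (sg * N)) with (sg * (t1 * N)) by ring. rewrite Ht1N. field.
      - ring. }
    split; [reflexivity|]. split.
    { intros s Hs0. apply (goodpt C HC sg Hs _ ((t1 - s) * N)).
      - nra.
      - fold r L. nra.
      - unfold y, vin, padd, pscal, xo; simpl. fold L r.
        replace ((s - 0) * (sg * N)) with (sg * (s * N)) by ring.
        replace (r + (t1 - s) * N) with (r + t1 * N - s * N) by ring. rewrite Ht1N. field.
      - unfold y, vin, padd, pscal; simpl. fold L a r.
        destruct Hs as [-> | ->]; nra.
      - unfold y, vin, padd, pscal; simpl. fold L a r.
        destruct Hs as [-> | ->]; nra. }
    split.
    { unfold event_ok, e1; simpl. split; [right; auto|]. split.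
      { intros (p1 & p2 & Hne & V1 & V2 & O1 & O2). apply Hq_nb. apply Hbdry.
        destruct p1; simpl in O1, V1; auto. right; right; eauto. }
      split; [intros [H|H]; exfalso; apply Hq_nb, Hbdry; auto|].
      split; [intros k Hk Ho; exfalso; apply Hq_nb, Hbdry; right; right; eauto|].
      intros _. rewrite HdN. unfold vin, vout, dot, tang; simpl. split; [ring|].
      exists t1. split; auto. intros s Hs0. unfold w. destruct (Rlt_dec s t1); [|lra].
      destruct Hs as [-> | ->]; ring. }
    split; [intros Hex; exfalso; auto|].
    intros _. simpl. split; [lra|]. split; [reflexivity|]. split; [reflexivity|]. split.
    { intros s Hs0. apply (goodpt C HC sg Hs _ ((s - t1) * N)).
      - nra.
      - fold r L. nra.
      - unfold q, vout, padd, pscal; simpl. fold L r. ring.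
      - unfold q, vout, padd, pscal; simpl. fold L a r.
        destruct Hs as [-> | ->]; nra.
      - unfold q, vout, padd, pscal; simpl. fold L a r.
        destruct Hs as [-> | ->]; nra. }
    split.
    { unfold event_ok, e2; simpl. split; [left; auto|]. split.
      { intros (p1 & p2 & Hne & V1 & V2 & O1 & O2).
        destruct p1 as [| |k1]; [| |exact (Hz_na k1 V1 O1)];
        destruct p2 as [| |k2]; try exact (Hz_na k2 V2 O2); try (apply Hne; reflexivity);
        apply Hz_LR; simpl in *; auto. }
      split; [intros; reflexivity|].
      split; [intros k Hk Ho; exfalso; exact (Hz_na k Hk Ho)|].
      intros Hd; exfalso; auto. }
    split; [intros; reflexivity|].
    intros Hn; exfalso; auto. }
  destruct (build C w tau delta ltac:(lra) ltac:(lra) P HP) as (Es & HF & HEs).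
  exists y, vin, w, [e1; e2], Es.
  split; [reflexivity|]. split.
  { simpl. fold a. assert (HL0 : 0 < L) by lra.
    assert (L * (t1 * (sg * om)) < a * L /\ - (a * L) < L * (t1 * (sg * om))).
    { destruct Hs as [-> | ->]; split; nra. }
    split; nra. }
  split; [simpl; nra|].
  split.
  { split; [unfold w; destruct (Rlt_dec 0 t1); [reflexivity|lra]|].
    split; [constructor; auto|].
    split.
    { intros s t Hs0 Hst HtT Hno. unfold w.
      destruct (Rlt_dec s t1), (Rlt_dec t t1); auto; try lra.
      exfalso. apply (Hno [e1; e2] e1); simpl; auto. lra. }
    split.
    { intros E e HE He Hd. destruct HE as [<-|HE].
      - destruct He as [<-|[<-|[]]].
        + simpl. rewrite HdN. unfold w. destruct (Rlt_dec t1 t1); [lra|].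
          unfold vin, dot, tang; simpl. destruct Hs as [-> | ->]; ring.
        + exfalso; auto.
      - exfalso; exact (HEs E e HE He Hd). }
    intros i j E1 E2 f1 f2 Hij H1 H2 Hf1 Hf2 Hd1 Hd2.
    destruct i as [|i].
    - destruct j as [|j]; [exfalso; apply Hij; reflexivity|]. simpl in H2. apply nth_error_In in H2.
      exfalso; exact (HEs E2 f2 H2 Hf2 Hd2).
    - simpl in H1. apply nth_error_In in H1. exfalso; exact (HEs E1 f1 H1 Hf1 Hd1). }
  split; [unfold w; destruct (Rlt_dec delta t1); [lra|reflexivity]|].
  exists [e1], e2. split; [reflexivity|]. change (epos e2) with z. rewrite Hzeq. simpl. fold a. split; [reflexivity|lra].
Qed.

Theorem lemma1 (C : cell) (HC : cell_ok C) (omh tau : R) (P : list (pt * pt)) :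
  0 < tau ->
  (* the particles initially in the cell *)
  (forall p, In p P -> inGamma C (fst p)) ->
  (* none of them collides with the disk before time tau *)
  (forall p, In p P -> exists w E, path_from C w tau 0 (fst p) (snd p) E /\
     forall e, In e E -> is_disk_ev C e -> tau <= etime e) ->
  forall (om delta : R), 0 < delta < tau ->
  forall left : bool,
  exists (y v : pt) (w : R -> R) (E : list event) (Es : list (list event)),
    opening C left y /\ inward left v /\
    sys_ok C omh delta ((y, v) :: P) w (E :: Es) /\
    w delta = om /\
    exists E0 e, E = E0 ++ [e] /\ opening C left (epos e).
Proof.
  intros Htau HIn HP om delta Hd left.
  assert (HL : 0 < cL C) by (destruct HC; lra).
  destruct left.
  - destruct (main_gen C HC 1 (or_introl eq_refl) omh tau P om delta HP Hd)
      as (y & v & w & E & Es & H1 & H2 & H3 & H4 & H5 & E0 & e & H6 & H7 & H8).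
    exists y, v, w, E, Es. unfold xo in *. simpl.
    split; [split; [lra|auto]|]. split; [lra|]. split; auto. split; auto.
    exists E0, e. split; auto. split; [lra|auto].
  - destruct (main_gen C HC (-1) (or_intror eq_refl) omh tau P om delta HP Hd)
      as (y & v & w & E & Es & H1 & H2 & H3 & H4 & H5 & E0 & e & H6 & H7 & H8).
    exists y, v, w, E, Es. unfold xo in *. simpl.
    split; [split; [lra|auto]|]. split; [lra|]. split; auto. split; auto.
    exists E0, e. split; auto. split; [lra|auto].
Qed.
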